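(* Let $\varepsilon^*,C^*,\gamma>0$, $\lambda_1,\lambda_2>0$, and suppose $\lambda_1h\le\Delta t\le\lambda_2h$. Let $\check\rho^n,\check\rho^{n+1}\in\mathcal C$ with $\varepsilon^*\le\check\rho^{n+1}\le C^*$ and $0<\check\rho^n\le C^*$ pointwise, let $\rho^n,\rho^{n+1}\in\mathcal C$ be pointwise positive, set $\tilde\rho^k=\check\rho^k-\rho^k$ ($k=n,n+1$), and assume $\|\tilde\rho^n\|_2\le\Delta t^{15/4}+h^{15/4}$. Let $\tilde\psi^n\in\mathcal C$ with $\|\tilde\psi^n\|_\infty\le h$. Define $\tilde S^{n+\frac12}=\check S^{n+\frac12}-S^{n+\frac12}$, where $$\check S^{n+\frac12}=\ln\check\rho^{n+1}-\frac{\check\rho^{n+1}-\check\rho^n}{2\check\rho^{n+1}}-\frac{(\check\rho^{n+1}-\check\rho^n)^2}{6(\check\rho^{n+1})^2},\quad S^{n+\frac12}=\ln\rho^{n+1}-\frac{\rho^{n+1}-\rho^n}{2\rho^{n+1}}-\frac{(\rho^{n+1}-\rho^n)^2}{6(\rho^{n+1})^2},$$ let $\mathbb K=\{(i,j,k):\rho^{n+1}_{i,j,k}\ge 2C^*+1\}$ and $L^*=|\mathbb K|$. Then there exist constants $\check C_2$ (depending only on $\varepsilon^*,\gamma,C^*$) and $\check C_3$ (depending only on $C^*,\gamma$) such that, for $\Delta t,h$ sufficiently small, $$\langle\tilde\rho^{n+1},\gamma\tilde S^{n+\frac12}+\tilde\psi^n\rangle\ge\frac{C^*}{6}\gamma L^*h^3-\check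 C_2\big(\gamma^2\|\tilde\rho^n\|_2^2+\|\tilde\psi^n\|_2^2\big),$$ and, if $L^*=0$, $$\langle\tilde\rho^{n+1},\gamma\tilde S^{n+\frac12}+\tilde\psi^n\rangle\ge\check C_3\|\tilde\rho^{n+1}\|_2^2-\check C_2\big(\gamma^2\|\tilde\rho^n\|_2^2+\|\tilde\psi^n\|_2^2\big).$$
   Context: Grid: $\Omega=(a,b)^3$, $h=(b-a)/N$; $\mathcal C$ is the space of real grid functions on the cell centers indexed by $1\le i,j,k\le N$. $\langle f,g\rangle=h^3\sum_{i,j,k=1}^Nf_{i,j,k}g_{i,j,k}$, $\|f\|_2^2=\langle f,f\rangle$, $\|f\|_\infty=\max_{i,j,k}|f_{i,j,k}|$. All nonlinear functions are applied pointwise. *)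

(* Defs.v *)
From HB Require Import structures.
From mathcomp Require Import all_boot all_order all_algebra.
From mathcomp Require Import all_classical all_reals all_analysis.
Set Implicit Arguments. Unset Strict Implicit. Unset Printing Implicit Defensive.
Import Order.TTheory GRing.Theory Num.Theory.
Local Open Scope ring_scope.

(* Cell-centred grid indices (i,j,k), 1 <= i,j,k <= N, represented 0-based. *)
Definition grid (N : nat) : finType := ('I_N * 'I_N * 'I_N)%type.

Definition gip (R : realType) (N : nat) (h : R) (f g : grid N -> R) : R :=
  h ^+ 3 * \sum_(p : grid N) f p * g p.

Definition gnorm2 (R : realType) (N : nat) (h : R) (f : grid N -> R) : R :=
  Num.sqrt (gip h f f).

Definition gnormInf (R : realType) (N : nat) (f : grid N -> R) : R :=
  \big[Num.max/0]_(p : grid N) `|f p|.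

Definition Sfun (R : realType) (N : nat) (rho1 rho0 : grid N -> R) (p : grid N) : R :=
  ln (rho1 p) - (rho1 p - rho0 p) / (2 * rho1 p)
  - (rho1 p - rho0 p) ^+ 2 / (6 * (rho1 p) ^+ 2).

Definition Lstar (R : realType) (N : nat) (Cs : R) (rho1 : grid N -> R) : nat :=
  #|[set p : grid N | 2 * Cs + 1 <= rho1 p]|.

(* Main.v *)
Require Import Defs.
From HB Require Import structures.
From mathcomp Require Import all_boot all_order all_algebra.
From mathcomp Require Import all_classical all_reals all_analysis.
From mathcomp Require Import ring lra.
Import Order.TTheory GRing.Theory Num.Theory.
Local Open Scope ring_scope.

Section S.
Variable R : realType.
Implicit Types (x y u v w a t p q z c D e r psi gam Cs eps : R).

Definition F (u v : R) : R :=
  ln u - (u - v) / (2 * u) - (u - v) ^+ 2 / (6 * u ^+ 2).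

Lemma Fe u v : 0 < u -> F u v = ln u - (1 - v/u)/2 - (1 - v/u)^+2/6.
Proof. move=> hu; rewrite /F; congr (_ - _ - _); field; lra. Qed.

Lemma polyP w a : 1 <= w ->
  0 <= 12*w^+3 - a*(w+1)*(5*w^+2 - a*(w^+2+1)) - 3/2*w^+2*(w+1).
Proof.
move=> hw.
set A := (w+1)*(w^+2+1).
have hA : 0 < A by rewrite /A; apply: mulr_gt0; nra.
have h17 : 27 <= 17*w^+2 - 31*w + 42.
  have := sqr_ge0 (w - 31/34). nra.
have hq : 0 <= 17*w^+3 - 31*w^+2 + 42*w - 6.
  have : 27 * w <= w * (17*w^+2 - 31*w + 42) by nra. nra.
have E : A * (12*w^+3 - a*(w+1)*(5*w^+2 - a*(w^+2+1)) - 3/2*w^+2*(w+1)) =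
   (A*a - 5/2*w^+2*(w+1))^+2 + (w+1)*w^+2*(17*w^+3 - 31*w^+2 + 42*w - 6)/4.
  by rewrite /A; field.
have : 0 <= A * (12*w^+3 - a*(w+1)*(5*w^+2 - a*(w^+2+1)) - 3/2*w^+2*(w+1)).
  rewrite E; apply: addr_ge0; first exact: sqr_ge0.
  apply: divr_ge0 => //; apply: mulr_ge0 => //; apply: mulr_ge0; nra.
by rewrite pmulr_rge0.
Qed.

Lemma ln_ge1 u : 0 < u -> 1 - 1/u <= ln u.
Proof.
move=> hu.
have h1 : ln (1 + (1/u - 1)) <= 1/u - 1.
  apply: le_ln1Dx. have : 0 < 1/u by rewrite divr_gt0. lra.
have e : ln u + ln (1/u) = 0.
  rewrite -lnM ?posrE ?divr_gt0 //. by rewrite div1r mulfV ?gt_eqF // ln1.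
move: h1; rewrite addrC subrK => h1. lra.
Qed.

Lemma ln_ratio u1 u2 : 0 < u1 -> u1 <= u2 ->
  2 * (1 - 1 / Num.sqrt (u2/u1)) <= ln u2 - ln u1.
Proof.
move=> h1 h12.
have h2 : 0 < u2 by apply: (lt_le_trans h1 h12).
have hq : 0 < u2/u1 by rewrite divr_gt0.
have hw : 0 < Num.sqrt (u2/u1) by rewrite sqrtr_gt0.
set w := Num.sqrt (u2/u1).
have e : u2/u1 = w^+2 by rewrite /w sqr_sqrtr // ltW.
rewrite -ln_div ?posrE // e lnXn // -mulr_natl.
have := ln_ge1 _ hw. lra.
Qed.


Lemma F_mono u1 u2 v : 0 < u1 -> u1 <= u2 ->
  (u2 - u1) / (4 * u2) <= F u2 v - F u1 v.
Proof.
move=> h1 h12.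
have h2 : 0 < u2 by apply: (lt_le_trans h1 h12).
have hL := ln_ratio _ _ h1 h12.
rewrite (Fe _ v h2) (Fe _ v h1).
move: hL; set w := Num.sqrt (u2/u1) => hL.
have hq : 1 <= u2/u1 by rewrite ler_pdivlMr // mul1r.
have hw1 : 1 <= w by rewrite /w -sqrtr1 ler_sqrt // (le_trans ler01 hq).
have hw0 : 0 < w by lra.
have e2 : u2 = w^+2 * u1.
  by rewrite /w sqr_sqrtr ?(le_trans ler01 hq) // mulfVK // gt_eqF.
have key : (u2-u1)/(4*u2) <= 2*(1-1/w) - (1 - v/u2)/2 - (1-v/u2)^+2/6
     + (1 - v/u1)/2 + (1-v/u1)^+2/6.
  rewrite -subr_ge0.
  have P := polyP w (v/u1) hw1.
  set a := v/u1 in P.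
  have -> : 2*(1-1/w) - (1 - v/u2)/2 - (1-v/u2)^+2/6 + (1 - v/u1)/2 + (1-v/u1)^+2/6
     - (u2-u1)/(4*u2) = (w - 1) * (12*w^+3 - a*(w+1)*(5*w^+2 - a*(w^+2+1)) - 3/2*w^+2*(w+1)) / (6 * w^+4).
    rewrite /a e2. field. by rewrite !gt_eqF.
  apply: divr_ge0; last by rewrite mulr_ge0 // exprn_ge0 // ltW.
  apply: mulr_ge0 => //; lra.
lra.
Qed.

Lemma F_Kmid Cs v : 0 < Cs -> 0 < v -> v <= Cs ->
  5/24 <= F (2*Cs+1) v - F Cs v.
Proof.
move=> hC hv hvC.
have hY : 0 < 2*Cs+1 by lra.
rewrite (Fe _ v hY) (Fe _ v hC).
have hl : 1 - Cs/(2*Cs+1) <= ln (2*Cs+1) - ln Cs.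
  rewrite -ln_div ?posrE //.
  have := ln_ge1 _ (divr_gt0 hY hC).
  by rewrite div1r invf_div.
set t := Cs/(2*Cs+1) in hl.
set a := v/Cs.
have et : v/(2*Cs+1) = a*t by rewrite /a /t; field; rewrite !gt_eqF.
have ht0 : 0 < t by rewrite divr_gt0.
have ht1 : t <= 1/2 by rewrite /t ler_pdivrMr //; lra.
have ha0 : 0 < a by rewrite divr_gt0.
have ha1 : a <= 1 by rewrite /a ler_pdivrMr //; lra.
rewrite et.
have h3 : 0 <= (1-t)*((1-a)*(4-t-a*(1+t))).
  apply: mulr_ge0; first lra. apply: mulr_ge0; nra.
have h4 : 0 <= (1-2*t)*(3+2*t) by apply: mulr_ge0; lra.
nra.
Qed.

Lemma div_anti p q z : 0 < p -> p <= q -> 0 <= z -> z/q <= z/p.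
Proof.
move=> hp hpq hz. have hq : 0 < q by apply: (lt_le_trans hp hpq).
by rewrite ler_pdivlMr // mulrAC ler_pdivrMr // ler_wpM2l.
Qed.

Lemma young c D e : 0 < c -> -(c/2)*D^+2 - e^+2/(2*c) <= D*e.
Proof.
move=> hc.
have h : 0 <= (c*D+e)^+2/(2*c) by apply: divr_ge0; [exact: sqr_ge0|lra].
have E : (c*D+e)^+2/(2*c) = c*D^+2/2 + D*e + e^+2/(2*c).
  by field; rewrite gt_eqF.
rewrite E in h.
lra.
Qed.

Lemma E_formula u x0 y0 : 0 < u ->
  F u x0 - F u y0 = (x0-y0) * (1/(2*u) + (2*(u-x0) + (x0-y0))/(6*u^+2)).
Proof. move=> hu; rewrite /F; field; by rewrite gt_eqF. Qed.

Lemma abs_le_sq r c : 0 <= c -> r^+2 <= c^+2 -> -c <= r <= c.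
Proof. move=> hc h; apply/andP; split; nra. Qed.

Lemma g2_bound y x0 r : 1 <= y -> 0 < x0 -> x0 <= y -> -1 <= r -> r <= 1 ->
  -1 <= 1/(2*y) + (2*(y-x0) + r)/(6*y^+2) <= 1.
Proof.
move=> hy1 hx0 hx0y hr1 hr2.
have hyp : 0 < y by lra.
set iy := 1/y.
have hiy0 : 0 < iy by rewrite divr_gt0.
have hiy1 : iy <= 1 by rewrite /iy ler_pdivrMr //; lra.
have hiy2 : iy^+2 <= 1 by rewrite expr2; have := ler_pM (ltW hiy0) (ltW hiy0) hiy1 hiy1; rewrite mulr1.
have eg : 1/(2*y) + (2*(y-x0) + r)/(6*y^+2) = iy/2 + (2*(y-x0) + r)*iy^+2/6.
  by rewrite /iy; field; rewrite gt_eqF.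
rewrite eg.
have hs1 : -1 <= 2*(y-x0) + r by lra.
have hs2 : 2*(y-x0) + r <= 2*y+1 by lra.
have a1 : (2*(y-x0) + r)*iy^+2 <= (2*y+1)*iy^+2 by apply: ler_wpM2r => //; exact: sqr_ge0.
have a2 : (2*y+1)*iy^+2 = 2*iy + iy^+2 by rewrite /iy; field; rewrite gt_eqF.
have a3 : -1 * iy^+2 <= (2*(y-x0) + r)*iy^+2 by apply: ler_wpM2r => //; exact: sqr_ge0.
apply/andP; split; lra.
Qed.

Lemma prod_bound r g c : 0 <= c -> -c <= r -> r <= c -> -1 <= g -> g <= 1 ->
  -c <= r*g <= c.
Proof.
move=> hc h1 h2 h3 h4. rewrite -ler_norml normrM -[c]mulr1.
apply: ler_pM => //; rewrite ler_norml; lra.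
Qed.

Lemma final_K Cs gam x y d E psi : 0 < Cs -> 0 < gam -> Cs+1 <= y-x -> 5/24 <= d ->
  -(1/48) <= E -> E <= 1/48 -> -(gam/48) <= psi -> psi <= gam/48 ->
  Cs/6*gam <= (x-y)*(gam*(-d + E) + psi).
Proof.
move=> hC hg hyx hd hE1 hE2 hp1 hp2.
have q : gam/6 <= gam*d - gam*E - psi.
  have : gam*(5/24) <= gam*d by rewrite ler_wpM2l // ltW.
  have : gam*E <= gam*(1/48) by rewrite ler_wpM2l // ltW.
  lra.
have q2 : (y-x)*(gam/6) <= (y-x)*(gam*d - gam*E - psi).
  by rewrite ler_wpM2l //; lra.
have q3 : Cs*(gam/6) <= (y-x)*(gam/6).
  by rewrite ler_wpM2r //; [apply: divr_ge0; lra|lra].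
have -> : (x-y)*(gam*(-d + E) + psi) = (y-x)*(gam*d - gam*E - psi) by ring.
lra.
Qed.

Lemma pt_K Cs gam x x0 y y0 psi :
  0 < Cs -> 0 < gam -> 0 < x -> x <= Cs -> 0 < x0 -> x0 <= Cs ->
  2*Cs+1 <= y -> 0 < y0 -> (x0-y0)^+2 <= 1/2304 -> `|psi| <= gam/48 ->
  Cs/6*gam <= (x-y)*(gam*(F x x0 - F y y0) + psi).
Proof.
move=> hC hg hx hxC hx0 hx0C hy hy0 hr hpsi.
have hY : 0 < 2*Cs+1 by lra.
have hyp : 0 < y by lra.
have m1' : 0 <= F y x0 - F (2*Cs+1) x0.
  apply: le_trans (F_mono _ _ x0 hY hy); apply: divr_ge0; lra.
have m2 := F_Kmid _ _ hC hx0 hx0C.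
have m3' : 0 <= F Cs x0 - F x x0.
  apply: le_trans (F_mono _ _ x0 hx hxC); apply: divr_ge0; lra.
have dF : 5/24 <= F y x0 - F x x0.
  move: m1' m2 m3'; clear; lra.
have Ee := E_formula y x0 y0 hyp.
set r := x0 - y0 in Ee hr.
have /andP[hr1 hr2] : -(1/48) <= r <= 1/48.
  by apply: abs_le_sq => //; rewrite -[(1/48)^+2]/(1/48 * (1/48)); lra.
have /andP[hg1 hg2] := g2_bound y x0 r (ltac:(lra) : 1 <= y) hx0 (ltac:(lra) : x0 <= y)
   (ltac:(lra) : -1 <= r) (ltac:(lra) : r <= 1).
have /andP[hE1 hE2] := prod_bound _ _ _ (ltac:(lra) : 0 <= 1/48) hr1 hr2 hg1 hg2.
have /andP[hp1 hp2] : -(gam/48) <= psi <= gam/48 by rewrite -ler_norml.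
have e : F x x0 - F y y0 = -(F y x0 - F x x0) + (F y x0 - F y y0) by ring.
rewrite e Ee.
apply: final_K => //.
move: hy hxC; clear; lra.
Qed.

Lemma pt_nonK Cs gam eps x x0 y y0 psi :
  0 < Cs -> 0 < gam -> 0 < eps -> eps <= x -> x <= Cs -> 0 < x0 -> x0 <= Cs ->
  0 < y -> y < 2*Cs+1 -> 0 < y0 -> (x0-y0)^+2 <= 1 ->
  gam/(8*(2*Cs+1))*(x-y)^+2
   - 4*(2*Cs+1)*((1/(2*eps) + (2*Cs+1)/(6*eps^+2))^+2+1)/gam
     *(gam^+2*(x0-y0)^+2 + psi^+2)
  <= (x-y)*(gam*(F x x0 - F y y0) + psi).
Proof.
move=> hC hg he hex hxC hx0 hx0C hy hyU hy0 hr.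
have hx : 0 < x by lra.
set U := 2*Cs+1.
have hU : 0 < U by rewrite /U; lra.
set K := 1/(2*eps) + (2*Cs+1)/(6*eps^+2).
set D := x - y.
have hM : D^+2/(4*U) <= D * (F x y0 - F y y0).
  case: (lerP x y) => hxy.
  - have m := F_mono _ _ y0 hx hxy.
    have m2 : (y-x)/(4*U) <= (y-x)/(4*y) by apply: div_anti; rewrite /U; lra.
    have : (y-x)*((y-x)/(4*U)) <= (y-x)*(F y y0 - F x y0).
      apply: ler_wpM2l; [lra|exact: le_trans m2 m].
    have -> : D^+2/(4*U) = (y-x)*((y-x)/(4*U)) by rewrite /D; field; lra.
    rewrite /D; lra.
  - have m := F_mono _ _ y0 hy (ltW hxy).
    have m2 : (x-y)/(4*U) <= (x-y)/(4*x) by apply: div_anti; rewrite /U; lra.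
    have : (x-y)*((x-y)/(4*U)) <= (x-y)*(F x y0 - F y y0).
      apply: ler_wpM2l; [lra|exact: le_trans m2 m].
    have -> : D^+2/(4*U) = (x-y)*((x-y)/(4*U)) by rewrite /D; field; lra.
    by rewrite /D.
have Ee := E_formula x x0 y0 hx.
set r := x0 - y0 in Ee hr.
set g := 1/(2*x) + (2*(x-x0) + r)/(6*x^+2) in Ee.
have /andP[hr1 hr2] : -1 <= r <= 1 by apply: abs_le_sq => //; rewrite expr1n.
set ix := 1/x. set ie := 1/eps.
have hix0 : 0 < ix by rewrite divr_gt0.
have hixe : ix <= ie by rewrite /ix /ie div_anti.
have eK : K = ie/2 + (2*Cs+1)*ie^+2/6 by rewrite /K /ie; field; rewrite gt_eqF.
have eg : g = ix/2 + (2*(x-x0) + r)*ix^+2/6 by rewrite /g /ix; field; rewrite gt_eqF.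
have hs1 : -(2*Cs+1) <= 2*(x-x0) + r by lra.
have hs2 : 2*(x-x0) + r <= 2*Cs+1 by lra.
have hix2 : ix^+2 <= ie^+2 by rewrite ler_sqr ?nnegrE; lra.
have hgK : g^+2 <= K^+2.
  have a1 : (2*(x-x0) + r)*ix^+2 <= (2*Cs+1)*ix^+2 by apply: ler_wpM2r => //; exact: sqr_ge0.
  have a2 : -(2*Cs+1)*ix^+2 <= (2*(x-x0) + r)*ix^+2 by apply: ler_wpM2r; [exact: sqr_ge0|lra].
  have a3 : (2*Cs+1)*ix^+2 <= (2*Cs+1)*ie^+2 by apply: ler_wpM2l => //; lra.
  have b1 : g <= K by rewrite eg eK; lra.
  have b2 : -K <= g by rewrite eg eK; lra.
  have hK : 0 <= K by lra.
  have E : K^+2 - g^+2 = (K-g)*(K+g) by ring.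
  by rewrite -subr_ge0 E; apply: mulr_ge0; lra.
set e := gam*(r*g) + psi.
have hY := young _ D e (divr_gt0 hg (mulr_gt0 (ltr0Sn _ 3) hU)).
have he2 : e^+2 <= 2*(K^+2+1)*(gam^+2*r^+2 + psi^+2).
  have t1 : e^+2 <= 2*(gam*(r*g))^+2 + 2*psi^+2.
    have E : 2*(gam*(r*g))^+2 + 2*psi^+2 - e^+2 = (gam*(r*g) - psi)^+2 by rewrite /e; ring.
    by rewrite -subr_ge0 E sqr_ge0.
  have t2 : (gam*(r*g))^+2 <= (gam^+2*r^+2)*K^+2.
    rewrite !exprMn mulrA. apply: ler_wpM2l => //. 
    by apply: mulr_ge0; exact: sqr_ge0.
  have t3 : 0 <= gam^+2*r^+2 by apply: mulr_ge0; exact: sqr_ge0.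
  have t4 : 0 <= psi^+2 by exact: sqr_ge0.
  have t5 : 0 <= K^+2 by exact: sqr_ge0.
  have t6 := mulr_ge0 t5 t4.
  have E : 2*(K^+2+1)*(gam^+2*r^+2 + psi^+2) = 2*((gam^+2*r^+2)*K^+2) + 2*(gam^+2*r^+2) + 2*(K^+2*psi^+2) + 2*psi^+2 by ring.
  rewrite E. lra.
have he3 : e^+2/(2*(gam/(4*U))) <= 4*U*(K^+2+1)/gam*(gam^+2*r^+2 + psi^+2).
  have -> : 4*U*(K^+2+1)/gam*(gam^+2*r^+2 + psi^+2) =
     (2*(K^+2+1)*(gam^+2*r^+2 + psi^+2))/(2*(gam/(4*U))).
    by field; rewrite !gt_eqF.
  apply: ler_wpM2r => //. rewrite invr_ge0; apply: mulr_ge0 => //.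
  by apply: divr_ge0; lra.
have hM2 : gam*(D^+2/(4*U)) <= gam*(D * (F x y0 - F y y0)) by rewrite ler_wpM2l // ltW.
have eF : F x x0 - F y y0 = r*g + (F x y0 - F y y0) by lra.
rewrite eF.
have -> : gam/(8*U)*D^+2 = gam*(D^+2/(4*U)) - (gam/(4*U)/2)*D^+2.
  by field; rewrite gt_eqF.
have -> : D*(gam*(r*g + (F x y0 - F y y0)) + psi) = gam*(D*(F x y0 - F y y0)) + D*e.
  by rewrite /e; ring.
rewrite -/r.
move: hY he3 hM2; clear; lra.
Qed.
End S.

Lemma gip_ge0 (R : realType) N (h : R) (f : grid N -> R) : 0 <= h -> 0 <= gip h f f.
Proof.
move=> hh; rewrite /gip; apply: mulr_ge0; first exact: exprn_ge0.
by apply: sumr_ge0 => p _; rewrite -expr2 sqr_ge0.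
Qed.

Lemma gnorm2_sq (R : realType) N (h : R) (f : grid N -> R) : 0 <= h ->
  gnorm2 h f ^+ 2 = h ^+ 3 * \sum_p f p ^+ 2.
Proof.
move=> hh; rewrite /gnorm2 sqr_sqrtr; last exact: gip_ge0.
rewrite /gip.
by congr (_ * _); apply: eq_bigr => p _; rewrite expr2.
Qed.

Lemma pt_le_gip (R : realType) N (h : R) (f : grid N -> R) p : 0 <= h ->
  h ^+ 3 * (f p * f p) <= gip h f f.
Proof.
move=> hh; rewrite /gip ler_wpM2l ?exprn_ge0 //.
rewrite (bigD1 p) //= lerDl.
by apply: sumr_ge0 => q _; rewrite -expr2 sqr_ge0.
Qed.

Lemma le_gnormInf (R : realType) N (f : grid N -> R) p : `|f p| <= gnormInf f.
Proof.
rewrite /gnormInf.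
have : p \in index_enum (grid N) := mem_index_enum p.
elim: (index_enum _) => [//|q s IH].
rewrite big_cons inE => /orP [/eqP <-|/IH h].
  by rewrite le_max lexx.
by rewrite le_max h orbT.
Qed.

Lemma Lstar_sum (R : realType) N (Cs : R) (rho1 : grid N -> R) :
  (Lstar Cs rho1)%:R = \sum_p (if 2 * Cs + 1 <= rho1 p then 1 else 0 : R).
Proof.
rewrite /Lstar -sum1_card natr_sum big_mkcond /=.
by apply: eq_bigr => p _; rewrite inE; case: ifP.
Qed.

Lemma Lstar0 (R : realType) N (Cs : R) (rho1 : grid N -> R) p :
  Lstar Cs rho1 = 0%N -> rho1 p < 2 * Cs + 1.
Proof.
move/eqP; rewrite /Lstar cards_eq0 => /eqP E.
have : p \notin [set p0 | 2 * Cs + 1 <= rho1 p0] by rewrite E inE.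
by rewrite inE -ltNge.
Qed.

Theorem mainTheorem7 (R : realType) (Cs gam : R) (hCs : 0 < Cs) (hgam : 0 < gam) :
  exists2 C3 : R, 0 < C3 &
  forall eps : R, 0 < eps ->
  exists2 C2 : R, 0 < C2 &
  forall (lam1 lam2 : R), 0 < lam1 -> 0 < lam2 ->
  forall (a b : R), a < b ->
  exists2 h0 : R, 0 < h0 &
  forall (N : nat) (dt : R), (0 < N)%N ->
  let h := (b - a) / N%:R in
  0 < dt -> dt <= h0 -> h <= h0 ->
  lam1 * h <= dt -> dt <= lam2 * h ->
  forall (crho0 crho1 rho0 rho1 psit : grid N -> R),
  (forall p, eps <= crho1 p /\ crho1 p <= Cs) ->
  (forall p, 0 < crho0 p /\ crho0 p <= Cs) ->
  (forall p, 0 < rho0 p) -> (forall p, 0 < rho1 p) ->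
  let rt0 := fun p => crho0 p - rho0 p in
  let rt1 := fun p => crho1 p - rho1 p in
  gnorm2 h rt0 <= powR dt (15 / 4) + powR h (15 / 4) ->
  gnormInf psit <= h ->
  let St := fun p => Sfun crho1 crho0 p - Sfun rho1 rho0 p in
  let lhs := gip h rt1 (fun p => gam * St p + psit p) in
  let err := C2 * (gam ^+ 2 * gnorm2 h rt0 ^+ 2 + gnorm2 h psit ^+ 2) in
  lhs >= Cs / 6 * gam * (Lstar Cs rho1)%:R * h ^+ 3 - err /\
  ((Lstar Cs rho1 = 0)%N -> lhs >= C3 * gnorm2 h rt1 ^+ 2 - err).
Proof.
have hU : 0 < 2*Cs+1 by lra.
exists (gam/(8*(2*Cs+1))).
  by apply: divr_gt0 => //; apply: mulr_gt0 => //; lra.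
move=> eps heps.
pose K := 1/(2*eps) + (2*Cs+1)/(6*eps^+2).
exists (4*(2*Cs+1)*(K^+2+1)/gam).
  apply: divr_gt0 => //; apply: mulr_gt0; first (apply: mulr_gt0 => //; lra).
  by have := sqr_ge0 K; lra.
move=> lam1 lam2 hl1 hl2 a b hab.
have hmin : 0 < (Num.min 1 (Num.min (1/(lam2^+3+1)) (Num.min (1/2304) (gam/48)))).
  have hl3 : 0 < lam2^+3 + 1 by have := exprn_gt0 3 hl2; lra.
  rewrite !lt_min ltr01; apply/and4P.
  by split; [by [] | apply: divr_gt0; lra | apply: divr_gt0; lra | apply: divr_gt0; lra].
exists (Num.min 1 (Num.min (1/(lam2^+3+1)) (Num.min (1/2304) (gam/48)))) => //.
move=> N dt hN h hdt hdth0 hhh0 hl1h hl2h crho0 crho1 rho0 rho1 psit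
  Hc1 Hc0 Hr0 Hr1 rt0 rt1 Hrt0 Hpsi St lhs err.
have hh : 0 < h by rewrite /h divr_gt0 ?subr_gt0 // ltr0n.
have hh0 := ltW hh.
move: hhh0; rewrite !le_min => /and4P [hh1 hhl hh2 hhg].
move: hdth0; rewrite !le_min => /and4P [hdt1 _ _ _].
have hnorm : gnorm2 h rt0 <= h ^+ 2.
  apply: (le_trans Hrt0).
  have p1 : powR dt (15/4) <= dt ^+ 3.
    rewrite -powR_mulrn; last exact: ltW.
    have H01 : 0 < dt <= 1 by rewrite hdt hdt1.
    by apply: (ger_powR H01); lra.
  have p2 : powR h (15/4) <= h ^+ 3.
    rewrite -powR_mulrn; last exact: ltW.
    have H01 : 0 < h <= 1 by rewrite hh hh1.
    by apply: (ger_powR H01); lra.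
  have p3 : dt ^+ 3 <= (lam2 * h) ^+ 3.
    apply: lerXn2r => //; rewrite nnegrE; first exact: ltW.
    by apply: mulr_ge0; exact: ltW.
  have hl3 : 0 < lam2^+3 + 1 by have := exprn_gt0 3 hl2; lra.
  have p4 : (lam2^+3+1) * h <= 1 by rewrite -ler_pdivlMl // mulr1 -[X in _ <= X]div1r.
  have p5 : (lam2 * h) ^+ 3 + h ^+ 3 = ((lam2^+3+1) * h) * h^+2 by ring.
  have p6 : ((lam2^+3+1) * h) * h^+2 <= h^+2.
    by rewrite -[X in _ <= X]mul1r ler_wpM2r // exprn_ge0.
  lra.
have hr0 : forall p, rt0 p ^+ 2 <= 1/2304.
  move=> p.
  have n0 : 0 <= gnorm2 h rt0 by rewrite /gnorm2 sqrtr_ge0.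
  have q1 : h^+3 * (rt0 p ^+ 2) <= gnorm2 h rt0 ^+ 2.
    rewrite /gnorm2 sqr_sqrtr; last exact: (@gip_ge0 R N h rt0 hh0).
    rewrite expr2; exact: (@pt_le_gip R N h rt0 p hh0).
  have q2 : gnorm2 h rt0 ^+ 2 <= h^+2 * h^+2.
    by rewrite expr2; apply: ler_pM.
  have q3 : rt0 p ^+ 2 <= h.
    have : h^+3 * (rt0 p ^+ 2) <= h^+3 * h.
      have -> : h^+3 * h = h^+2 * h^+2 by ring.
      exact: le_trans q1 q2.
    by rewrite ler_pM2l // exprn_gt0.
  lra.
have hpsi : forall p, `|psit p| <= gam/48.
  by move=> p; apply: (le_trans (@le_gnormInf R N psit p)); apply: (le_trans Hpsi).
pose C2 := 4*(2*Cs+1)*(K^+2+1)/gam.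
pose C3 := gam/(8*(2*Cs+1)).
have hC2 : 0 <= C2.
  apply: divr_ge0; last lra. apply: mulr_ge0; first lra.
  by have := sqr_ge0 K; lra.
have ptm : forall p, rho1 p < 2*Cs+1 ->
   C3 * (rt1 p ^+ 2) - C2 * (gam^+2 * (rt0 p ^+ 2) + psit p ^+ 2)
   <= rt1 p * (gam * St p + psit p).
  move=> p hp.
  have [he1 hc1] := Hc1 p. have [hc0 hc0'] := Hc0 p.
  have := @pt_nonK R Cs gam eps _ _ _ _ (psit p) hCs hgam heps he1 hc1 hc0 hc0' (Hr1 p) hp (Hr0 p)
     (le_trans (hr0 p) (ltac:(lra) : 1/2304 <= (1:R))).
  exact.
have ptK : forall p, 2*Cs+1 <= rho1 p ->
   Cs/6*gam <= rt1 p * (gam * St p + psit p).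
  move=> p hp.
  have [he1 hc1] := Hc1 p. have [hc0 hc0'] := Hc0 p.
  exact: (@pt_K R Cs gam _ _ _ _ (psit p) hCs hgam (lt_le_trans heps he1) hc1 hc0 hc0' hp (Hr0 p) (hr0 p) (hpsi p)).
have elhs : lhs = h^+3 * \sum_p rt1 p * (gam * St p + psit p) by [].
have eerr : err = h^+3 * \sum_p C2 * (gam^+2 * (rt0 p ^+ 2) + psit p ^+ 2).
  rewrite /err /C2 !gnorm2_sq // -mulr_sumr big_split /= -!mulr_sumr; ring.
split.
- have -> : Cs / 6 * gam * (Lstar Cs rho1)%:R * h ^+ 3 - err =
     h^+3 * \sum_p ((if 2 * Cs + 1 <= rho1 p then Cs/6*gam else 0) - C2 * (gam^+2 * (rt0 p ^+ 2) + psit p ^+ 2)).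
    rewrite eerr Lstar_sum sumrB.
    have -> : \sum_p (if 2 * Cs + 1 <= rho1 p then Cs/6*gam else 0) =
       \sum_p Cs/6*gam * (if 2 * Cs + 1 <= rho1 p then 1 else 0).
      by apply: eq_bigr => p _; case: ifP; rewrite ?mulr1 ?mulr0.
    rewrite -!mulr_sumr; ring.
  rewrite elhs ler_wpM2l ?exprn_ge0 //.
  apply: ler_sum => p _.
  have hq : 0 <= C2 * (gam^+2 * (rt0 p ^+ 2) + psit p ^+ 2).
    apply: mulr_ge0 => //; apply: addr_ge0; last exact: sqr_ge0.
    by apply: mulr_ge0; exact: sqr_ge0.
  case: ifP => hp.
  + have := ptK p hp; lra.
  + have hp' : rho1 p < 2*Cs+1 by rewrite ltNge hp.
    have := ptm p hp'.
    have : 0 <= C3 * rt1 p ^+ 2.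
      by apply: mulr_ge0; [apply: divr_ge0; lra | exact: sqr_ge0].
    lra.
- move=> hL0.
  have -> : C3 * gnorm2 h rt1 ^+ 2 - err =
     h^+3 * \sum_p (C3 * (rt1 p ^+ 2) - C2 * (gam^+2 * (rt0 p ^+ 2) + psit p ^+ 2)).
    rewrite eerr gnorm2_sq // sumrB -!mulr_sumr /C3; ring.
  rewrite elhs ler_wpM2l ?exprn_ge0 //.
  apply: ler_sum => p _.
  exact: ptm p (@Lstar0 R N Cs rho1 p hL0).
Qed.
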